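(* Let $q'>0$, $e'\in(0,1)$, $q_{\max}>0$. There is no $(q,\omega')\in\mathcal D_6$ such that the orbits are linked for every $(e,\omega)\in\mathcal D_5$.
   Context: For $q>0$, $e\in[0,1]$ and angles $\omega,\omega'$, define $r_{\pm}=\frac{q(1+e)}{1\pm e\cos\omega}$, $r'_{\pm}=\frac{q'(1+e')}{1\pm e'\cos\omega'}$ (extended-real values allowed), $d^+=r'_+-r_+$, $d^-=r'_--r_-$. Linked orbits: $d^+d^-<0$. $\mathcal D_5=\{(e,\omega):0\le e\le1,\ 0\le\omega\le\pi\}$, $\mathcal D_6=\{(q,\omega'):0<q\le q_{\max},\ 0\le\omega'\le\pi/2\}$. *)

(* Defs.v *)
From Stdlib Require Import Reals.
Open Scope R_scope.

(* Extended reals needed here: finite values or +infinity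
   (the radii r_{+-} = q(1+e)/(1 +- e cos w) are >= 0 denominators for e in [0,1],
   and become +infinity exactly when the denominator vanishes). *)
Inductive ER : Type := ERfin (x : R) | ERpinf.

Definition ER_lt (a b : ER) : Prop :=
  match a, b with
  | ERfin x, ERfin y => x < y
  | ERfin _, ERpinf => True
  | ERpinf, _ => False
  end.

Definition rad (q e den : R) : ER :=
  if Req_EM_T den 0 then ERpinf else ERfin (q * (1 + e) / den).

Definition r_plus (q e w : R) : ER := rad q e (1 + e * cos w).
Definition r_minus (q e w : R) : ER := rad q e (1 - e * cos w).

(* d^+ = r'_+ - r_+ ,  d^- = r'_- - r_- ; linked iff d^+ d^- < 0, i.e. the two
   differences are nonzero with opposite signs.  "a - b < 0" is ER_lt a b. *)
Definition linked (q e w q' e' w' : R) : Prop :=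
  (ER_lt (r_plus q' e' w') (r_plus q e w) /\ ER_lt (r_minus q e w) (r_minus q' e' w'))
  \/
  (ER_lt (r_plus q e w) (r_plus q' e' w') /\ ER_lt (r_minus q' e' w') (r_minus q e w)).

Definition D5 (e w : R) : Prop := 0 <= e <= 1 /\ 0 <= w <= PI.
Definition D6 (qmax q w' : R) : Prop := 0 < q <= qmax /\ 0 <= w' <= PI / 2.

(* Main.v *)
Require Import Defs.
From Stdlib Require Import Reals Lra.
Open Scope R_scope.

Lemma rad_fin q e d : d <> 0 -> rad q e d = ERfin (q * (1 + e) / d).
Proof. intros H. unfold rad. destruct (Req_EM_T d 0); [contradiction|reflexivity]. Qed.

Lemma rad_inf q e : rad q e 0 = ERpinf.
Proof. unfold rad. destruct (Req_EM_T 0 0); [reflexivity|contradiction]. Qed.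

Theorem mainTheorem16 (q' e' qmax : R)
  (hq' : 0 < q') (he' : 0 < e' < 1) (hqmax : 0 < qmax) :
  ~ (exists q w', D6 qmax q w' /\
       forall e w, D5 e w -> linked q e w q' e' w').
Proof.
  intros [q [w' [[Hq Hw'] H]]].
  assert (Hc0 : 0 <= cos w') by (apply cos_ge_0; lra).
  assert (Hc1 : cos w' <= 1) by apply COS_bound.
  set (c := cos w') in *.
  assert (Hp : 0 < 1 + e' * c) by nra.
  assert (Hm : 0 < 1 - e' * c) by nra.
  assert (HAB : q' * (1 + e') / (1 + e' * c) <= q' * (1 + e') / (1 - e' * c)).
  { unfold Rdiv. apply Rmult_le_compat_l. nra.
    apply Rinv_le_contravar; nra. }
  assert (H0 := H 0 0 ltac:(unfold D5; split; [lra|]; split; [lra| pose proof PI_RGT_0; lra])).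
  assert (H1 := H 1 0 ltac:(unfold D5; split; [lra|]; split; [lra| pose proof PI_RGT_0; lra])).
  unfold linked, r_plus, r_minus in H0, H1.
  fold c in H0, H1.
  rewrite cos_0 in H0, H1.
  rewrite !(rad_fin q' e') in H0, H1 by lra.
  rewrite !(rad_fin q 0) in H0 by lra.
  replace (1 - 1 * 1) with 0 in H1 by ring.
  rewrite rad_inf in H1.
  rewrite (rad_fin q 1) in H1 by lra.
  simpl in H0, H1.
  replace (q * (1 + 0) / (1 + 0 * 1)) with q in H0 by field.
  replace (q * (1 + 0) / (1 - 0 * 1)) with q in H0 by field.
  replace (q * (1 + 1) / (1 + 1 * 1)) with q in H1 by field.
  lra.
Qed.
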